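(* Let $\mathcal O$ be any quantum algorithm (unitary, using no measurements) such that for every $x$, $\mathcal O\ket{x}\ket{\mathbf 0}=\ket{x}\ket{\Psi_x}=\ket{x}(\ket{\Psi_x^1}+\ket{\Psi_x^0})$, and let $\chi:\mathbb Z\to\{0,1\}$ be a Boolean function such that $\ket{\Psi_x^1}$ (the good part) and $\ket{\Psi_x^0}$ (the bad part) are the components of $\ket{\Psi_x}$ on computational basis states $\ket{z}$ with $\chi(z)=1$ and $\chi(z)=0$ respectively, where $\sin^2(\theta_x)=\langle\Psi_x^1|\Psi_x^1\rangle$ with $0<\theta_x\le\pi/2$ for every $x$. Let $M\ge1$ be an integer. Then there exists a quantum algorithm $Par\_Est\_Zero(\mathcal O,\chi,M)$ that maps $\ket{x}\ket{\mathbf 0}\ket{0}\mapsto\ket{x}\otimes\big(\alpha_x\ket{u_x}\ket{1}+\beta_x\ket{u'_x}\ket{0}\big)$ (with normalized states $\ket{u_x},\ket{u'_x}$), where for every $x$, $|\alpha_x|^2=\dfrac{\sin^2(M\theta_x)}{M^2\sin^2(\theta_x)}$. It uses $\mathcal O$ and its inverse $O(M)$ times. *)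

(* Defs.v *)
From HB Require Import structures.
From mathcomp Require Import all_boot all_order all_algebra.
From mathcomp Require Import all_classical all_reals.
From mathcomp Require Import trigo.
From mathcomp Require Import complex.
Set Implicit Arguments. Unset Strict Implicit. Unset Printing Implicit Defensive.
Import Order.TTheory GRing.Theory Num.Theory.
Local Open Scope ring_scope.

Definition qstate (R : realType) (T : finType) := T -> R[i].
Definition qop (R : realType) (T : finType) := T -> T -> R[i].

Definition qapply (R : realType) (T : finType) (U : qop R T) (v : qstate R T)
  : qstate R T := fun i => \sum_(j : T) U i j * v j.

(* U^dagger U = I  (for finite dimensions this is unitarity). *)
Definition unitary (R : realType) (T : finType) (U : qop R T) : Prop :=
  forall i j : T, \sum_(k : T) (U k i)^* * U k j = (i == j)%:R.

Definition adjoint (R : realType) (T : finType) (U : qop R T) : qop R T :=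
  fun i j => (U j i)^*.

Definition ket (R : realType) (T : finType) (b : T) : qstate R T :=
  fun i => (i == b)%:R.

Definition sqnorm (R : realType) (T : finType) (v : qstate R T) : R[i] :=
  \sum_(i : T) `|v i| ^+ 2.

(*   work register   |z>,  z : 'I_N.+1   (|0> is ord0) -- acted on by O    *)
(*   extra ancilla   |a>,  a : 'I_K.+1   (|0> is ord0), free workspace     *)
(*   output qubit    |b>,  b : bool      (true = |1>, false = |0>)         *)

Definition oreg (n N : nat) : finType := ('I_n * 'I_N.+1)%type.
Definition areg (K : nat) : finType := ('I_K.+1 * bool)%type.
Definition sysreg (n N K : nat) : finType := (oreg n N * areg K)%type.

(* One step of a quantum query algorithm: either a fixed (O-independent)  *)
(* operator on the whole system, or a use of O or of its inverse O^-1,    *)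
(* possibly controlled by the ancilla/output registers: the query is      *)
(* applied on the branch of those basis states c with ctrl c = true, and  *)
(* the identity is applied elsewhere (ctrl = predT gives a plain query).  *)
Inductive qstep (R : realType) (n N K : nat) :=
| Fixed of qop R (sysreg n N K)
| Query of (areg K -> bool) & bool (* true: use O^-1 *).

Definition query_gate (R : realType) (n N K : nat) (O : qop R (oreg n N))
    (ctrl : areg K -> bool) (inv : bool) : qop R (sysreg n N K) :=
  fun i j =>
    if i.2 == j.2 then
      (if ctrl j.2 then (if inv then adjoint O else O) i.1 j.1
       else (i.1 == j.1)%:R)
    else 0.

Definition step_gate (R : realType) (n N K : nat) (O : qop R (oreg n N))
    (s : qstep R n N K) : qop R (sysreg n N K) :=
  match s with
  | Fixed U => U
  | Query ctrl inv => query_gate O ctrl inv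
  end.

Definition run (R : realType) (n N K : nat) (O : qop R (oreg n N))
    (alg : seq (qstep R n N K)) (v : qstate R (sysreg n N K))
  : qstate R (sysreg n N K) :=
  foldl (fun w s => qapply (step_gate O s) w) v alg.

Definition fixed_unitary (R : realType) (n N K : nat) (s : qstep R n N K) : Prop :=
  match s with
  | Fixed U => unitary U
  | Query _ _ => True
  end.

Definition nqueries (R : realType) (n N K : nat) (alg : seq (qstep R n N K)) : nat :=
  count (fun s => if s is Query _ _ then true else false) alg.

Definition oracle_prepares (R : realType) (n N : nat) (O : qop R (oreg n N))
    (Psi : 'I_n -> qstate R 'I_N.+1) : Prop :=
  forall (x : 'I_n) (y : 'I_n) (z : 'I_N.+1),
    O (y, z) (x, ord0) = (y == x)%:R * Psi x z.

Definition good_weight (R : realType) (N : nat) (chi : 'I_N.+1 -> bool)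
    (psi : qstate R 'I_N.+1) : R[i] :=
  \sum_(z : 'I_N.+1 | chi z) `|psi z| ^+ 2.

(* every fixed step of the algorithm is unitary (no measurements) *)
Definition alg_unitary (R : realType) (n N K : nat) (alg : seq (qstep R n N K)) : Prop :=
  foldr (fun s P => fixed_unitary s /\ P) True alg.

Definition init_state (R : realType) (n N K : nat) (x : 'I_n)
  : qstate R (sysreg n N K) := @ket R (sysreg n N K) ((x, ord0), (ord0, false)).

Definition out_state (R : realType) (n N K : nat) (x : 'I_n)
    (alpha beta : R[i]) (u u' : qstate R ('I_N.+1 * 'I_K.+1)%type)
  : qstate R (sysreg n N K) :=
  fun i => if i.1.1 == x then
             (if i.2.2 then alpha * u (i.1.2, i.2.1) else beta * u' (i.1.2, i.2.1))
           else 0.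

(* Main.v *)
Require Import Defs.
From HB Require Import structures.
From mathcomp Require Import all_boot all_order all_algebra.
From mathcomp Require Import all_classical all_reals.
From mathcomp Require Import trigo.
From mathcomp Require Import complex.
From mathcomp Require Import ring lra.
From Stdlib Require Import Lia.
From mathcomp Require Import zify.
Import Order.TTheory GRing.Theory Num.Theory.
Set Implicit Arguments. Unset Strict Implicit. Unset Printing Implicit Defensive.
Local Open Scope ring_scope.

Section Generic.
Variable R : realType.
Local Notation C := (R[i]).

Lemma sum_pair (I J : finType) (F : I * J -> C) :
  \sum_(p : I * J) F p = \sum_(i : I) \sum_(j : J) F (i, j).
Proof. by rewrite pair_bigA; apply: eq_bigr => -[]. Qed.

Lemma sum_deltal (I : finType) (i0 : I) (F : I -> C) :
  \sum_(j : I) (j == i0)%:R * F j = F i0.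
Proof.
rewrite (bigD1 i0) //= eqxx mul1r big1 ?addr0 // => j /negbTE ->.
by rewrite mul0r.
Qed.

Lemma sum_deltar (I : finType) (i0 : I) (F : I -> C) :
  \sum_(j : I) (i0 == j)%:R * F j = F i0.
Proof. by rewrite -[RHS](sum_deltal i0); apply: eq_bigr => j _; rewrite eq_sym. Qed.

Lemma unitary_r (T : finType) (U : qop R T) : unitary U ->
  forall i k, \sum_j U i j * (U k j)^* = (i == k)%:R.
Proof.
move=> HU i k.
pose A : 'M[C]_#|T| := \matrix_(a, b) U (enum_val a) (enum_val b).
pose B : 'M[C]_#|T| := \matrix_(a, b) (U (enum_val b) (enum_val a))^*.
have reidx (F : T -> C) : \sum_(t : T) F t = \sum_(a < #|T|) F (enum_val a).
  rewrite (reindex (@enum_val T T)) //=.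
  by exists (@enum_rank T) => t _; [exact: enum_valK | exact: enum_rankK].
have BA : B *m A = 1%:M.
  apply/matrixP => a b; rewrite !mxE.
  transitivity (\sum_(t : T) (U t (enum_val a))^* * U t (enum_val b)).
    by rewrite reidx; apply: eq_bigr => c _; rewrite !mxE.
  by rewrite HU (inj_eq enum_val_inj).
have AB := mulmx1C BA.
have := congr1 (fun X : 'M[C]_#|T| => X (enum_rank i) (enum_rank k)) AB.
rewrite /= !mxE (inj_eq enum_rank_inj) => <-.
rewrite (reidx (fun t => U i t * (U k t)^*)).
by apply: eq_bigr => a _; rewrite !mxE !enum_rankK.
Qed.

Definition liftr (T1 T2 : finType) (U : qop R T2) : qop R (T1 * T2)%type :=
  fun i j => (i.1 == j.1)%:R * U i.2 j.2.
Definition liftl (T1 T2 : finType) (U : qop R T1) : qop R (T1 * T2)%type :=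
  fun i j => U i.1 j.1 * (i.2 == j.2)%:R.

Lemma conj_nat (b : bool) : (b%:R : C)^* = b%:R.
Proof. by case: b; rewrite ?conjC0 ?conjC1. Qed.

Lemma natr_and (a b : bool) : ((a && b)%:R : C) = a%:R * b%:R.
Proof. by case: a; case: b; rewrite ?mul1r ?mul0r. Qed.

Lemma unitary_liftr (T1 T2 : finType) (U : qop R T2) :
  unitary U -> unitary (@liftr T1 T2 U).
Proof.
move=> HU [i1 i2] [j1 j2]; rewrite sum_pair /liftr /=.
under eq_bigr do under eq_bigr do rewrite rmorphM rmorph_nat mulrACA -natrM mulnb.
under eq_bigr do rewrite -big_distrr /= HU.
rewrite xpair_eqE.
under eq_bigr do rewrite natr_and -mulrA.
by rewrite (sum_deltal i1) natr_and.
Qed.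

Lemma unitary_liftl (T1 T2 : finType) (U : qop R T1) :
  unitary U -> unitary (@liftl T1 T2 U).
Proof.
move=> HU [i1 i2] [j1 j2]; rewrite sum_pair exchange_big /liftl /=.
under eq_bigr do under eq_bigr do rewrite rmorphM rmorph_nat mulrACA -natrM mulnb.
under eq_bigr do rewrite -big_distrl /= HU.
rewrite xpair_eqE.
under eq_bigr do rewrite mulrC natr_and -mulrA.
by rewrite (sum_deltal i2) natr_and mulrC.
Qed.

Lemma qapply_liftr (T1 T2 : finType) (U : qop R T2) v i :
  qapply (@liftr T1 T2 U) v i = \sum_(j2 : T2) U i.2 j2 * v (i.1, j2).
Proof.
rewrite /qapply sum_pair /liftr.
under eq_bigr do under eq_bigr do rewrite /= -mulrA.
under eq_bigr do rewrite -big_distrr.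
by rewrite (sum_deltar i.1 (fun i0 => \sum_j2 U i.2 j2 * v (i0, j2))).
Qed.

Lemma qapply_liftl (T1 T2 : finType) (U : qop R T1) v i :
  qapply (@liftl T1 T2 U) v i = \sum_(j1 : T1) U i.1 j1 * v (j1, i.2).
Proof.
rewrite /qapply sum_pair /liftl.
apply: eq_bigr => j1 _.
under eq_bigr do rewrite /= -mulrA.
by rewrite -big_distrr /= (sum_deltar i.2 (fun j2 => v (j1, j2))).
Qed.

Definition diag (T : finType) (d : T -> C) : qop R T :=
  fun i j => (i == j)%:R * d j.

Lemma unitary_diag (T : finType) (d : T -> C) :
  (forall j, (d j)^* * d j = 1) -> unitary (diag d).
Proof.
move=> Hd i j; rewrite /diag.
under eq_bigr do rewrite rmorphM rmorph_nat mulrACA -mulrA.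
rewrite sum_deltal.
by case: eqP => [->|]; rewrite ?Hd ?mul1r ?mul0r.
Qed.

Lemma qapply_diag (T : finType) (d : T -> C) v i :
  qapply (diag d) v i = d i * v i.
Proof. by rewrite /qapply /diag; under eq_bigr do rewrite -mulrA; rewrite sum_deltar. Qed.

Definition permop (T : finType) (f : T -> T) : qop R T :=
  fun i j => (i == f j)%:R.

Lemma unitary_perm (T : finType) (f : T -> T) : injective f -> unitary (permop f).
Proof.
move=> Hf i j; rewrite /permop.
under eq_bigr do rewrite rmorph_nat.
rewrite (sum_deltal (f i)) (inj_eq Hf).
by [].
Qed.

Lemma qapply_perm (T : finType) (f : T -> T) v i :
  involutive f -> qapply (permop f) v i = v (f i).
Proof.
move=> Hf; rewrite /qapply /permop.
rewrite -(sum_deltal (f i) v); apply: eq_bigr => j _.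
by rewrite eq_sym (can2_eq Hf Hf).
Qed.

End Generic.


Section G2.
Variable R : realType.
Local Notation C := (R[i]).

Lemma qapply_query n N K (O : qop R (oreg n N)) (ctrl : areg K -> bool) inv
   (v : qstate R (sysreg n N K)) i :
  qapply (query_gate O ctrl inv) v i =
  if ctrl i.2 then \sum_(j1 : oreg n N) (if inv then adjoint O else O) i.1 j1 * v (j1, i.2)
  else v i.
Proof.
rewrite /qapply sum_pair /query_gate.
under eq_bigr => j1 _.
  rewrite (bigD1 i.2) //= eqxx big1; last first.
    by move=> j2 /negbTE; rewrite eq_sym => ->; rewrite mul0r.
  rewrite addr0.
over.
case: (ctrl i.2) => //=.
rewrite (bigD1 i.1) //= eqxx mul1r big1 ?addr0; first by rewrite -surjective_pairing.
by move=> j /negbTE; rewrite eq_sym => ->; rewrite mul0r.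
Qed.

Lemma sqnorm_ge0 (S : finType) (f : qstate R S) : 0 <= sqnorm f.
Proof. by apply: sumr_ge0 => c _; rewrite exprn_ge0. Qed.

Lemma norm_decomp (S : finType) (s0 : S) (f : qstate R S) :
  exists (a : C) (u : qstate R S),
    sqnorm u = 1 /\ (forall c, f c = a * u c) /\ `|a| ^+ 2 = sqnorm f.
Proof.
set t := sqnorm f.
have t0 : 0 <= t by exact: sqnorm_ge0.
have a0 : 0 <= sqrtC t by rewrite sqrtC_ge0.
have na : `|sqrtC t| ^+ 2 = t by rewrite ger0_norm // sqrtCK.
have [tz|tnz] := eqVneq t 0.
  exists 0, (@ket R S s0); split; last split.
  - rewrite /sqnorm (bigD1 s0) //= /ket eqxx normr1 expr1n big1 ?addr0 //.
    by move=> c /negbTE ->; rewrite normr0 expr0n.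
  - move=> c; rewrite mul0r.
    have /psumr_eq0P H : t = 0 by [].
    have /eqP := H (fun i _ => exprn_ge0 2 (normr_ge0 (f i))) c isT.
    by rewrite expf_eq0 /= normr_eq0 => /eqP ->.
  - by rewrite normr0 expr0n tz.
exists (sqrtC t), (fun c => f c / sqrtC t); split; last split.
- have an : sqrtC t != 0 by rewrite sqrtC_eq0.
  rewrite /sqnorm.
  under eq_bigr do rewrite normrM normfV exprMn exprVn na.
  by rewrite -big_distrl /= -/t divff.
- move=> c; rewrite mulrC divfK // sqrtC_eq0 //.
- by [].
Qed.

Lemma out_decomp n N K (x : 'I_n) (v : qstate R (sysreg n N K)) :
  (forall i, i.1.1 != x -> v i = 0) ->
  exists (a b : C) (u u' : qstate R ('I_N.+1 * 'I_K.+1)%type),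
    sqnorm u = 1 /\ sqnorm u' = 1 /\ v = out_state x a b u u' /\
    `|a| ^+ 2 = sqnorm (fun c : 'I_N.+1 * 'I_K.+1 => v ((x, c.1), (c.2, true))).
Proof.
move=> Hv.
have [a [u [Hu [Hau Ha]]]] := norm_decomp (ord0, ord0)
   (fun c : 'I_N.+1 * 'I_K.+1 => v ((x, c.1), (c.2, true))).
have [b [u' [Hu' [Hbu _]]]] := norm_decomp (ord0, ord0)
   (fun c : 'I_N.+1 * 'I_K.+1 => v ((x, c.1), (c.2, false))).
exists a, b, u, u'; split => //; split => //; split => //.
apply: funext => -[[y z] [c e]]; rewrite /out_state /=.
have [->|yx] := eqVneq y x; last by rewrite Hv.
by case: e; [rewrite -(Hau (z, c)) | rewrite -(Hbu (z, c))].
Qed.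

End G2.


Section Slice.
Variable R : realType.
Local Notation C := (R[i]).
Variables (n N : nat) (chi : 'I_N.+1 -> bool) (O : qop R (oreg n N))
  (Psi : 'I_n -> qstate R 'I_N.+1) (x : 'I_n).
Hypotheses (HO : unitary O) (HP : oracle_prepares O Psi).

Definition Gp (z : 'I_N.+1) : C := if chi z then Psi x z else 0.
Definition Bp (z : 'I_N.+1) : C := if chi z then 0 else Psi x z.
Local Notation s2 := (good_weight chi (Psi x)).

Lemma PsiGB z : Psi x z = Gp z + Bp z.
Proof. by rewrite /Gp /Bp; case: (chi z); rewrite ?addr0 ?add0r. Qed.

Lemma Psi_norm : \sum_z (Psi x z)^* * Psi x z = 1.
Proof.
transitivity (\sum_(k : oreg n N) (O k (x,ord0))^* * O k (x,ord0)); last first.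
  by rewrite HO eqxx.
rewrite [RHS]sum_pair [RHS](bigD1 x) //= [X in _ = _ + X]big1 ?addr0.
  by under [RHS]eq_bigr do rewrite HP eqxx mul1r.
move=> y /negbTE yx; apply: big1 => z _.
by rewrite HP yx mul0r rmorph0 mul0r.
Qed.

Lemma dotG : \sum_z (Psi x z)^* * Gp z = s2.
Proof.
rewrite /good_weight [RHS]big_mkcond /=; apply: eq_bigr => z _.
by rewrite /Gp; case: (chi z); rewrite ?mulr0 // normCKC.
Qed.

Lemma dotB : \sum_z (Psi x z)^* * Bp z = 1 - s2.
Proof.
rewrite -Psi_norm -dotG -sumrB; apply: eq_bigr => z _.
by rewrite [X in _ = _ * X - _]PsiGB mulrDr addrAC subrr add0r.
Qed.

Lemma Qslice (p q : C) (y0 : 'I_n) (z0 : 'I_N.+1) :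
  \sum_(j1 : oreg n N) O (y0, z0) j1 *
    ((if j1.2 == ord0 then -1 else 1) *
     \sum_(k1 : oreg n N) (O k1 j1)^* * ((k1.1 == x)%:R * (p * Gp k1.2 - q * Bp k1.2)))
  = (y0 == x)%:R * ((p * (1 - 2 * s2) + 2 * q * (1 - s2)) * Gp z0
                    + (q * (1 - 2 * s2) - 2 * p * s2) * Bp z0).
Proof.
set w1 := fun k1 : oreg n N => (k1.1 == x)%:R * (p * Gp k1.2 - q * Bp k1.2).
set U := fun j1 : oreg n N => \sum_(k1 : oreg n N) (O k1 j1)^* * w1 k1.
have HU0 y' : U (y', ord0) = (y' == x)%:R * (p * s2 - q * (1 - s2)).
  rewrite /U /w1 sum_pair (bigD1 y') //= [X in _ + X]big1 ?addr0; last first.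
    move=> y /negbTE yy; apply: big1 => z _.
    by rewrite HP yy mul0r rmorph0 mul0r.
  have [->|yx] := eqVneq y' x.
    rewrite mul1r -dotB -dotG !big_distrr -sumrB /=; apply: eq_bigr => z _.
    by rewrite HP !eqxx !mul1r; ring.
  rewrite mul0r; apply: big1 => z _.
  by rewrite mul0r mulr0.
transitivity (\sum_(j1 : oreg n N) O (y0, z0) j1 * U j1
              - 2 * \sum_(j1 : oreg n N) O (y0, z0) j1 * ((j1.2 == ord0)%:R * U j1)).
  rewrite big_distrr -sumrB /=; apply: eq_bigr => j1 _.
  by case: (j1.2 == ord0); rewrite /U /=; ring.
have -> : \sum_(j1 : oreg n N) O (y0, z0) j1 * U j1 = w1 (y0, z0).
  rewrite /U.
  under eq_bigr do rewrite big_distrr /=.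
  rewrite exchange_big /=.
  transitivity (\sum_(k1 : oreg n N) (\sum_(j1 : oreg n N) O (y0, z0) j1 * (O k1 j1)^*) * w1 k1).
    apply: eq_bigr => k1 _; rewrite big_distrl; apply: eq_bigr => j1 _; by rewrite mulrA.
  under eq_bigr do rewrite unitary_r //.
  rewrite (bigD1 (y0, z0)) //= eqxx mul1r [X in _ + X]big1 ?addr0 //.
  by move=> k /negbTE; rewrite eq_sym => ->; rewrite mul0r.
have -> : \sum_(j1 : oreg n N) O (y0, z0) j1 * ((j1.2 == ord0)%:R * U j1)
   = Psi y0 z0 * ((y0 == x)%:R * (p * s2 - q * (1 - s2))).
  rewrite sum_pair /=.
  under eq_bigr do under eq_bigr do rewrite mulrCA.
  under eq_bigr do rewrite sum_deltal HP HU0 -!mulrA.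
  by rewrite sum_deltar.
rewrite /w1 /=.
have [->|yx] := eqVneq y0 x; last by rewrite !(mul0r, mulr0) subr0.
rewrite PsiGB !mul1r; ring.
Qed.

End Slice.


Section Trig.
Variable R : realType.

Fixpoint PQ (s : R) (j : nat) : R * R :=
  match j with
  | 0 => (1, 1)
  | j'.+1 => let pq := PQ s j' in
     (pq.1 * (1 - 2 * s) + 2 * pq.2 * (1 - s), pq.2 * (1 - 2 * s) - 2 * pq.1 * s)
  end.

Lemma PQ_trig (t : R) j :
  (PQ (sin t ^+ 2) j).1 * sin t = sin ((2 * j + 1)%:R * t) /\
  (PQ (sin t ^+ 2) j).2 * cos t = cos ((2 * j + 1)%:R * t).
Proof.
have h1 : 1 - sin t ^+ 2 = cos t ^+ 2 by rewrite cos2sin2.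
have h2 : 1 - 2 * sin t ^+ 2 = cos t ^+ 2 - sin t ^+ 2 by rewrite cos2sin2; ring.
elim: j => [|j [Hp Hq]] /=.
  by rewrite !mul1r.
set p := (PQ _ j).1 in Hp *; set q := (PQ _ j).2 in Hq *.
have -> : ((2 * j.+1 + 1)%:R * t) = (2 * j + 1)%:R * t + (t + t).
  have e : (2 * j.+1 + 1 = (2 * j + 1) + 2)%N by lia.
  by rewrite e natrD mulrDl mulr2n mulrDl mul1r.
rewrite h1 h2; split; rewrite !(sinD, cosD) -Hp -Hq; ring.
Qed.

Lemma sum_sin (t : R) (M : nat) :
  (\sum_(j < M) sin ((2 * j + 1)%:R * t)) * sin t = sin (M%:R * t) ^+ 2 /\
  (\sum_(j < M) cos ((2 * j + 1)%:R * t)) * sin t = sin (M%:R * t) * cos (M%:R * t).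
Proof.
elim: M => [|M [HA HC]].
  by rewrite !big_ord0 !mul0r sin0 expr0n mul0r.
rewrite !big_ord_recr /= !mulrDl HA HC.
set u := M%:R * t.
have -> : (2 * M + 1)%:R * t = u + u + t.
  have e : (2 * M + 1 = M + M + 1)%N by lia.
  by rewrite /u e !natrD !mulrDl mul1r.
have -> : M.+1%:R * t = u + t by rewrite /u -addn1 natrD mulrDl mul1r.
rewrite !sinD !cosD.
split.
  rewrite -{1}[sin u ^+ 2]mulr1 -(cos2Dsin2 t); ring.
rewrite !(sinD, cosD) -{1}[sin u * cos u]mulr1 -(cos2Dsin2 t); ring.
Qed.

Lemma final_real (t : R) (M : nat) : 0 < sin t ->
  let s := sin t ^+ 2 in
  (M%:R^-1) ^+ 2 * ((\sum_(a < M) (PQ s a).1) ^+ 2 * s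
                    + (\sum_(a < M) (PQ s a).2) ^+ 2 * (1 - s))
  = sin (M%:R * t) ^+ 2 / (M%:R ^+ 2 * sin t ^+ 2).
Proof.
move=> st0 s.
have [HA HC] := sum_sin t M.
have eP : (\sum_(a < M) (PQ s a).1) * sin t = \sum_(j < M) sin ((2 * j + 1)%:R * t).
  by rewrite big_distrl; apply: eq_bigr => j _; exact: (PQ_trig t j).1.
have eQ : (\sum_(a < M) (PQ s a).2) * cos t = \sum_(j < M) cos ((2 * j + 1)%:R * t).
  by rewrite big_distrl; apply: eq_bigr => j _; exact: (PQ_trig t j).2.
have -> : (\sum_(a < M) (PQ s a).1) ^+ 2 * s + (\sum_(a < M) (PQ s a).2) ^+ 2 * (1 - s)
   = sin (M%:R * t) ^+ 2 / sin t ^+ 2.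
  rewrite /s -cos2sin2 -!exprMn eP eQ.
  have st : sin t != 0 by rewrite gt_eqF.
  apply: (mulIf (expf_neq0 2 st)); rewrite divfK ?expf_neq0 //.
  rewrite mulrDl -!exprMn HA HC.
  have h := cos2Dsin2 (M%:R * t).
  set S := sin (M%:R * t) in h *; set Cm := cos (M%:R * t) in h *.
  rewrite -[RHS]mulr1 -h; ring.
by rewrite exprVn mulrCA -invfM.
Qed.

End Trig.


Section Alg.
Variable R : realType.
Local Notation C := (R[i]).
Variables (n N : nat) (chi : 'I_N.+1 -> bool) (M' : nat).
Local Notation T := (sysreg n N M').

Definition mm : C := sqrtC ((M'.+1)%:R^-1).
Definition wv (a : 'I_M'.+1) : C := (a == ord0)%:R + mm.
Definition Wn : C := \sum_a wv a * wv a.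
Definition Hh : qop R 'I_M'.+1 := fun a b => (a == b)%:R - wv a * (2 * wv b / Wn).
Definition Hgate : qop R T := @liftr R (oreg n N) (areg M') (@liftl R 'I_M'.+1 bool Hh).
Definition cn (c : areg M') : areg M' := (c.1, c.2 (+) (c.1 == ord0)).
Definition Cgate : qop R T := @liftr R (oreg n N) (areg M') (@permop R (areg M') cn).
Definition ctrl (k : nat) (c : areg M') : bool := (k <= c.1)%N.
Definition d1 k (i : T) : C := if ctrl k i.2 then (if chi i.1.2 then 1 else -1) else 1.
Definition d3 k (i : T) : C := if ctrl k i.2 then (if i.1.2 == ord0 then -1 else 1) else 1.
Definition round k : seq (qstep R n N M') :=
  [:: Fixed (diag (d1 k)); @Query R n N M' (ctrl k) true; Fixed (diag (d3 k)); @Query R n N M' (ctrl k) false].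
Definition alg0 : seq (qstep R n N M') := [:: @Query R n N M' (fun _ => true) false; Fixed Hgate].
Definition algR : seq (qstep R n N M') := flatten (map round (iota 1 M')).
Definition algF : seq (qstep R n N M') := [:: Fixed Hgate; Fixed Cgate].
Definition alg : seq (qstep R n N M') := alg0 ++ algR ++ algF.

Lemma mm_ge0 : 0 <= mm.
Proof. by rewrite sqrtC_ge0 invr_ge0 ler0n. Qed.

Lemma mm2 : mm ^+ 2 = (M'.+1%:R)^-1.
Proof. by rewrite sqrtCK. Qed.

Lemma Mmm : M'.+1%:R * (mm * mm) = 1.
Proof. by rewrite -expr2 mm2 divff // pnatr_eq0. Qed.

Lemma Wn_val : Wn = 2 + 2 * mm.
Proof.
rewrite /Wn.
transitivity (\sum_(a < M'.+1) ((a == ord0)%:R * (1 + 2 * mm) + mm * mm)).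
  apply: eq_bigr => a _; rewrite /wv; case: (a == ord0) => /=; rewrite ?mul1r ?mul0r ?add0r; ring.
rewrite big_split /= sum_deltal sumr_const card_ord.
transitivity (1 + 2 * mm + 1); last by ring.
congr (_ + _); rewrite -mulr_natl; exact: Mmm.
Qed.

Lemma Wn_neq0 : Wn != 0.
Proof.
rewrite Wn_val; apply: lt0r_neq0.
by apply: ltr_wpDr; [rewrite mulr_ge0 ?mm_ge0 | rewrite ltr0n].
Qed.

Lemma wv_conj a : (wv a)^* = wv a.
Proof. by rewrite geC0_conj // /wv addr_ge0 ?ler0n ?mm_ge0. Qed.

Lemma Wn_conj : Wn^* = Wn.
Proof. by rewrite geC0_conj // Wn_val addr_ge0 ?mulr_ge0 ?ler0n ?mm_ge0. Qed.

Lemma Hh_conj a b : (Hh a b)^* = Hh a b.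
Proof.
have rw c : wv c \is Num.real by apply: ger0_real; rewrite addr_ge0 ?ler0n ?mm_ge0.
have rW : Wn \is Num.real by apply: ger0_real; rewrite Wn_val addr_ge0 ?mulr_ge0 ?ler0n ?mm_ge0.
apply: conj_Creal; rewrite /Hh rpredB ?rpred_nat // rpredM ?rw // rpredM ?rpred_nat ?rw //.
rewrite rpredM ?rpred_nat ?rw //.
by rewrite realV.
Qed.

Lemma Hh_col a : Hh a ord0 = - mm.
Proof.
rewrite /Hh Wn_val /wv eqxx.
have h : 2 + 2 * mm != 0 by rewrite -Wn_val Wn_neq0.
have e : 2 * (1 + mm) / (2 + 2 * mm) = 1 by rewrite mulrDr mulr1 divff.
rewrite e (eq_sym a); case: (ord0 == a) => /=; ring.
Qed.

Lemma Hh_row b : Hh ord0 b = - mm.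
Proof.
rewrite /Hh Wn_val /wv eqxx.
have h : 2 + 2 * mm != 0 by rewrite -Wn_val Wn_neq0.
have e : 2 * (1 + mm) / (2 + 2 * mm) = 1 by rewrite mulrDr mulr1 divff.
have e2 : forall X, (1 + mm) * (2 * X / (2 + 2 * mm)) = X * (2 * (1 + mm) / (2 + 2 * mm)).
  by move=> X; rewrite !mulrA; congr (_ * _); ring.
rewrite e2 e mulr1 (eq_sym b).
case: (ord0 == b) => /=; ring.
Qed.

Lemma unitary_Hh : unitary Hh.
Proof.
move=> i j.
under eq_bigr do rewrite Hh_conj.
set ci := 2 * wv i / Wn; set cj := 2 * wv j / Wn.
transitivity (\sum_k ((k == i)%:R * (k == j)%:R) - \sum_k (k == i)%:R * (wv k * cj)
   - \sum_k (k == j)%:R * (wv k * ci) + Wn * (ci * cj)).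
  rewrite /Wn big_distrl -!sumrB -big_split /=; apply: eq_bigr => k _.
  rewrite /Hh -/ci -/cj; ring.
rewrite !sum_deltal /ci /cj.
have h := Wn_neq0.
field => //.
Qed.

Lemma cnK : involutive cn.
Proof. by move=> [a b]; rewrite /cn /= addbK. Qed.

Lemma alg_unitary_cat (s1 s2 : seq (qstep R n N M')) :
  alg_unitary s1 -> alg_unitary s2 -> alg_unitary (s1 ++ s2).
Proof. by elim: s1 => //= s s1 IH [H1 H2] H; split => //; apply: IH. Qed.

Lemma unitary_pm1 (T' : finType) (d : T' -> C) :
  (forall j, d j = 1 \/ d j = -1) -> unitary (diag d).
Proof.
move=> Hd; apply: unitary_diag => j.
by case: (Hd j) => ->; rewrite ?rmorph1 ?mulr1 // rmorphN1 mulrNN mulr1.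
Qed.

Lemma alg_unitary_alg : alg_unitary alg.
Proof.
have UH : unitary Hgate by apply: unitary_liftr; apply: unitary_liftl; exact: unitary_Hh.
have UC : unitary Cgate.
  by apply: unitary_liftr; apply: unitary_perm; apply: can_inj cnK.
apply: alg_unitary_cat; first by [].
apply: alg_unitary_cat; last by [].
rewrite /algR; elim: (iota 1 M') => //= k s IH.
split; first by apply: unitary_pm1 => j; rewrite /d1; do 2?case: ifP => _; auto.
split => //; split; first by apply: unitary_pm1 => j; rewrite /d3; do 2?case: ifP => _; auto.
by [].
Qed.

Lemma nqueries_alg : (nqueries alg <= 2 * M'.+1)%N.
Proof.
rewrite /nqueries /alg !count_cat /= /algR.
have -> : forall s, count (fun s0 : qstep R n N M' => if s0 is Query _ _ then true else false)
     (flatten (map round s)) = (2 * size s)%N.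
  elim => //= k s IH; rewrite IH; lia.
rewrite size_iota; lia.
Qed.

End Alg.


Section Run.
Variable R : realType.
Local Notation C := (R[i]).
Variables (n N : nat) (chi : 'I_N.+1 -> bool) (M' : nat).
Local Notation T := (sysreg n N M').
Variables (O : qop R (oreg n N)) (Psi : 'I_n -> qstate R 'I_N.+1) (x : 'I_n).
Hypotheses (HO : unitary O) (HP : oracle_prepares O Psi).
Local Notation s2 := (good_weight chi (Psi x)).
Local Notation G := (Gp chi Psi x).
Local Notation B := (Bp chi Psi x).

Definition st (p q : areg M' -> C) : qstate R T :=
  fun i => (i.1.1 == x)%:R * (p i.2 * G i.1.2 + q i.2 * B i.1.2).

Lemma run_cat (s1 s2 : seq (qstep R n N M')) v :
  run O (s1 ++ s2) v = run O s2 (run O s1 v).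
Proof. by rewrite /run foldl_cat. Qed.

Lemma round_run k p q :
  run O (round R n chi M' k) (st p q) =
  st (fun c => if ctrl k c then p c * (1 - 2 * s2) + 2 * q c * (1 - s2) else p c)
     (fun c => if ctrl k c then q c * (1 - 2 * s2) - 2 * p c * s2 else q c).
Proof.
apply: funext => -[[y0 z0] c].
rewrite /run /= qapply_query /=.
case Hc: (ctrl k c) => /=.
  rewrite /st /= Hc -(Qslice chi x HO HP).
  apply: eq_bigr => j1 _; congr (_ * _).
  rewrite qapply_diag /d3 /= Hc; congr (_ * _).
  rewrite qapply_query /= Hc; apply: eq_bigr => k1 _.
  rewrite qapply_diag /d1 /= Hc /adjoint; congr (_ * _).
  rewrite /Gp /Bp; case: (chi k1.2) => /=; ring.
rewrite qapply_diag /d3 /= Hc mul1r qapply_query /= Hc qapply_diag /d1 /= Hc mul1r.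
by rewrite /st /= Hc.
Qed.

Variable t : R.
Hypothesis Ht : s2 = ((sin t ^+ 2)%:C)%C.
Local Notation mu := (@mm R M').

Definition pk (k : nat) (c : areg M') : C :=
  if c.2 then 0 else - mu * (((PQ (sin t ^+ 2) (minn c.1 k)).1)%:C)%C.
Definition qk (k : nat) (c : areg M') : C :=
  if c.2 then 0 else - mu * (((PQ (sin t ^+ 2) (minn c.1 k)).2)%:C)%C.

Lemma init_run : run O (@alg0 R n N M') (@init_state R n N M' x) = st (pk 0) (qk 0).
Proof.
apply: funext => -[[y0 z0] [a b]].
rewrite /run /= /Hgate qapply_liftr /=.
transitivity (\sum_(j2 : areg M') liftl (@Hh R M') (a, b) j2 *
                ((j2 == (ord0, false))%:R * O (y0, z0) (x, ord0))).
  apply: eq_bigr => j2 _; congr (_ * _).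
  rewrite qapply_query /= /init_state /ket.
  under eq_bigr do rewrite xpair_eqE natr_and mulrCA.
  by rewrite sum_deltal mulrC.
under eq_bigr do rewrite mulrCA.
rewrite sum_deltal /liftl /= Hh_col HP /st /pk /qk /= (PsiGB chi) ?minn0 /=.
have -> : (1%:C)%C = 1 :> C by [].
by case: b => /=; ring.
Qed.

Lemma rounds_run k :
  run O (flatten (map (round R n chi M') (iota 1 k))) (st (pk 0) (qk 0)) = st (pk k) (qk k).
Proof.
elim: k => [|k IH] //.
have -> : iota 1 k.+1 = iota 1 k ++ [:: k.+1].
  by rewrite -(addn1 k) iotaD addnC.
rewrite map_cat flatten_cat run_cat IH.
rewrite (_ : flatten _ = round R n chi M' k.+1); last by [].
rewrite round_run.
have E1 (a : 'I_M'.+1) : (k.+1 <= a)%N -> minn a k = k /\ minn a k.+1 = k.+1.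
  by move=> H; split; apply/minn_idPr; lia.
have E2 (a : 'I_M'.+1) : (a < k.+1)%N -> minn a k = a /\ minn a k.+1 = a.
  by move=> H; split; apply/minn_idPl; lia.
congr st; apply: funext => -[a b]; rewrite /pk /qk /ctrl /=.
  case: b => /=; first by case: ifP => _; ring.
  case: (leqP k.+1 a) => H.
    rewrite ?(E1 a H).1 ?(E1 a H).2 /=.
    rewrite Ht !(rmorphD, rmorphB, rmorphM, rmorph_nat, rmorph1) /=; ring.
  by rewrite ?(E2 a H).1 ?(E2 a H).2.
case: b => /=; first by case: ifP => _; ring.
case: (leqP k.+1 a) => H.
  rewrite ?(E1 a H).1 ?(E1 a H).2 /=.
  rewrite Ht !(rmorphD, rmorphB, rmorphM, rmorph_nat, rmorph1) /=; ring.
by rewrite ?(E2 a H).1 ?(E2 a H).2.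
Qed.

Lemma final_form p q i :
  run O (@algF R n N M') (st p q) i =
  \sum_(a' : 'I_M'.+1) @Hh R M' (cn i.2).1 a' * st p q (i.1, (a', (cn i.2).2)).
Proof.
rewrite /run /= /Cgate qapply_liftr.
set F := fun j2 => qapply (@Hgate R n N M') (st p q) (i.1, j2).
transitivity (F (cn i.2)); first exact: (qapply_perm F i.2 (@cnK M')).
rewrite /F /Hgate qapply_liftr sum_pair /=.
apply: eq_bigr => a' _.
rewrite /liftl /=.
rewrite (bigD1 (cn i.2).2) //= eqxx mulr1 [X in _ + X]big1 ?addr0 //.
by move=> b' /negbTE; rewrite eq_sym => ->; rewrite mulr0 mul0r.
Qed.

Lemma run_alg i : run O (alg R n chi M') (@init_state R n N M' x) i =
  \sum_(a' : 'I_M'.+1) @Hh R M' (cn i.2).1 a' * st (pk M') (qk M') (i.1, (a', (cn i.2).2)).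
Proof.
rewrite /alg !run_cat init_run.
have -> : run O (algR R n chi M') (st (pk 0) (qk 0)) = st (pk M') (qk M') by exact: rounds_run.
exact: final_form.
Qed.

Hypothesis st0 : 0 < sin t.

Lemma conjCr (r : R) : ((r%:C)%C)^* = (r%:C)%C :> C.
Proof. exact: conjc_real. Qed.

Lemma CM (a b : R) : ((a * b)%:C)%C = (a%:C)%C * (b%:C)%C :> C.
Proof. by rewrite rmorphM. Qed.
Lemma CD (a b : R) : ((a + b)%:C)%C = (a%:C)%C + (b%:C)%C :> C.
Proof. by rewrite rmorphD. Qed.
Lemma CB (a : R) : ((1 - a)%:C)%C = 1 - (a%:C)%C :> C.
Proof. by rewrite rmorphB. Qed.

Lemma normCr2 (r : R) : `|(r%:C)%C| ^+ 2 = ((r ^+ 2)%:C)%C :> C.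
Proof. by rewrite normCK conjCr -expr2 rmorphXn. Qed.

Lemma sumG2 : \sum_z `|G z| ^+ 2 = s2.
Proof.
rewrite /good_weight [RHS]big_mkcond /=; apply: eq_bigr => z _.
by rewrite /Gp; case: (chi z); rewrite ?normr0 ?expr0n.
Qed.

Lemma sumB2 : \sum_z `|B z| ^+ 2 = 1 - s2.
Proof.
rewrite -(Psi_norm x HO HP) -sumG2 -sumrB; apply: eq_bigr => z _.
rewrite -normCKC /Gp /Bp; case: (chi z); rewrite ?normr0 ?expr0n /=; ring.
Qed.

Local Notation P a := (((PQ (sin t ^+ 2) a).1)%:C)%C.
Local Notation Q a := (((PQ (sin t ^+ 2) a).2)%:C)%C.

Lemma true_part (z : 'I_N.+1) (a : 'I_M'.+1) :
  run O (alg R n chi M') (@init_state R n N M' x) ((x, z), (a, true)) =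
  (a == ord0)%:R * (mu ^+ 2 * ((\sum_(a' < M'.+1) P a') * G z + (\sum_(a' < M'.+1) Q a') * B z)).
Proof.
rewrite run_alg /=.
have t1 : (true%:R : C) = 1 by [].
have [->|Ha0] := eqVneq a ord0.
  transitivity (\sum_(a' < M'.+1) (mu ^+ 2 * G z * P a' + mu ^+ 2 * B z * Q a')).
    apply: eq_bigr => a' _.
    rewrite Hh_row /st /pk /qk /= eqxx (minn_idPl _) ?(leq_ord a') // t1; ring.
  rewrite big_split /= -!big_distrr /= t1; ring.
rewrite mul0r big1 // => a' _.
by rewrite /st /pk /qk /= !mul0r addr0 mulr0 mulr0.
Qed.

Lemma main_x : exists (alpha beta : C) (u u' : qstate R ('I_N.+1 * 'I_M'.+1)%type),
  sqnorm u = 1 /\ sqnorm u' = 1 /\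
  run O (alg R n chi M') (@init_state R n N M' x) = @out_state R n N M' x alpha beta u u' /\
  `|alpha| ^+ 2 = ((sin (M'.+1%:R * t) ^+ 2 / (M'.+1%:R ^+ 2 * sin t ^+ 2))%:C)%C.
Proof.
have Hz : forall i, i.1.1 != x -> run O (alg R n chi M') (@init_state R n N M' x) i = 0.
  move=> i Hi; rewrite run_alg big1 // => a' _.
  by rewrite /st /= (negbTE Hi) mul0r mulr0.
have [a [b [u [u' [Hu [Hu' [Hv Ha]]]]]]] := out_decomp Hz.
exists a, b, u, u'; do 3 split => //.
rewrite Ha.
set SP := \sum_(a' < M'.+1) P a'; set SQ := \sum_(a' < M'.+1) Q a'.
transitivity (sqnorm (fun c : 'I_N.+1 * 'I_M'.+1 =>
   (c.2 == ord0)%:R * (mu ^+ 2 * (SP * G c.1 + SQ * B c.1)))).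
  by apply: congr1; apply: funext => c; exact: true_part.
rewrite /sqnorm sum_pair /=.
under eq_bigr => z _.
  under eq_bigr do rewrite normrM exprMn.
  rewrite (bigD1 ord0) //= ?eqxx normr1 expr1n mul1r [X in _ + X]big1 ?addr0; last first.
    by move=> c /negbTE ->; rewrite normr0 expr0n mul0r.
over.
transitivity (`|mu ^+ 2| ^+ 2 * (`|SP| ^+ 2 * \sum_z `|G z| ^+ 2 + `|SQ| ^+ 2 * \sum_z `|B z| ^+ 2)).
  rewrite !big_distrr -big_split big_distrr /=; apply: eq_bigr => z _.
  rewrite normrM exprMn; congr (_ * _).
  rewrite /Gp /Bp; case: (chi z); rewrite !mulr0 ?addr0 ?add0r normrM exprMn ?normr0 ?expr0n;
   rewrite ?mulr0 ?addr0 ?add0r //.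
rewrite sumG2 sumB2 Ht.
have -> : SP = (((\sum_(a' < M'.+1) (PQ (sin t ^+ 2) a').1))%:C)%C by rewrite rmorph_sum.
have -> : SQ = (((\sum_(a' < M'.+1) (PQ (sin t ^+ 2) a').2))%:C)%C by rewrite rmorph_sum.
rewrite !normCr2.
have -> : `|mu ^+ 2| ^+ 2 = ((((M'.+1)%:R : R)^-1 ^+ 2)%:C)%C.
  by rewrite -normCr2 mm2 fmorphV rmorph_nat.
have E := final_real M'.+1 st0; cbv zeta in E.
rewrite -E.
by rewrite (CM (M'.+1%:R^-1 ^+ 2)) CD (CM (_ ^+ 2) (sin t ^+ 2)) (CM (_ ^+ 2) (1 - _)) CB.
Qed.

End Run.


Unset Implicit Arguments.

Theorem lemma4 :
  exists c : nat,
  forall (R : realType) (n N : nat) (chi : 'I_N.+1 -> bool) (M : nat),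
    (1 <= M)%N ->
    exists (K : nat) (alg : seq (qstep R n N K)),
      alg_unitary alg /\
      (nqueries alg <= c * M)%N /\
      forall (O : qop R (oreg n N)) (Psi : 'I_n -> qstate R 'I_N.+1)
             (theta : 'I_n -> R),
        unitary O ->
        oracle_prepares O Psi ->
        (forall x, 0 < theta x <= pi / 2) ->
        (forall x, good_weight chi (Psi x) = ((sin (theta x) ^+ 2)%:C)%C) ->
        forall x : 'I_n,
          exists (alpha beta : R[i]) (u u' : qstate R ('I_N.+1 * 'I_K.+1)%type),
            sqnorm u = 1 /\ sqnorm u' = 1 /\
            run O alg (@init_state R n N K x) = @out_state R n N K x alpha beta u u' /\
            `|alpha| ^+ 2 =
              ((sin (M%:R * theta x) ^+ 2 / (M%:R ^+ 2 * sin (theta x) ^+ 2))%:C)%C.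
Proof.
exists 2%N => R n N chi M HM.
case: M HM => [//|M'] _.
exists M', (alg R n chi M'); split; first exact: alg_unitary_alg.
split; first exact: nqueries_alg.
move=> O Psi theta HO HP Hth Hgw x.
have st0 : 0 < sin (theta x).
  apply: sin_gt0_pi; have /andP [h1 h2] := Hth x.
  have hp := pi_gt0 R.
  apply/andP; split => //; lra.
exact: (@main_x R n N chi M' O Psi x HO HP (theta x) (Hgw x) st0).
Qed.
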